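(* For every bounded distributive lattice $L$, the set of prime ideals of $\Phi(L)$ is $$\mathcal{I}_p(\Phi(L))=\{(I\times I)\cap \Phi(L): I\in \mathcal{I}_p(L)\}\cup\{(I\times L)\cap\Phi(L): I\in\mathcal{I}_p(L)\}.$$
   Context: All lattices are bounded distributive with $0\neq 1$. For a lattice $L$, $\Phi(L)=\{(a,b)\in L\times L : a\le b\}$, ordered coordinatewise; it is a $(0,1)$-sublattice of $L\times L$. $\mathcal{I}_p(L)$ denotes the set of prime ideals of $L$ (ideals $I\neq L$ such that $a,b\notin I$ implies $a\wedge b\notin I$). *)

(* Defs.v *)
From HB Require Import structures.
From mathcomp Require Import all_boot all_order.
Set Implicit Arguments. Unset Strict Implicit. Unset Printing Implicit Defensive.
Import Order.Theory.
Local Open Scope order_scope.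

Definition is_ideal d (T : latticeType d) (I : T -> Prop) : Prop :=
  (exists x, I x) /\
  (forall x y, I y -> x <= y -> I x) /\
  (forall x y, I x -> I y -> I (x `|` y)).

Definition is_prime_ideal d (T : latticeType d) (I : T -> Prop) : Prop :=
  is_ideal I /\ (exists x, ~ I x) /\
  (forall a b, ~ I a -> ~ I b -> ~ I (a `&` b)).

(* Phi(L) = {(a,b) in L x L : a <= b}, as a (0,1)-sublattice of the product
   lattice L x L (coordinatewise order). *)
Section Phi.
Context {d : Order.disp_t} (L : tbDistrLatticeType d).

Definition LL := (L *p L)%type.

Definition phi_pred : pred LL := fun x => x.1 <= x.2.

Record Phi := MkPhi { phi_val : LL; phi_valP : phi_pred phi_val }.

HB.instance Definition _ := [isSub for phi_val].
HB.instance Definition _ := [Choice of Phi by <:].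

Lemma phi_meet_closed : meet_closed phi_pred.
Proof.
move=> [a1 a2] [b1 b2]; rewrite !unfold_in /phi_pred /= => h1 h2.
rewrite lexI; apply/andP; split.
- by apply: le_trans h1; exact: leIl.
- by apply: le_trans h2; exact: leIr.
Qed.

Lemma phi_join_closed : join_closed phi_pred.
Proof.
move=> [a1 a2] [b1 b2]; rewrite !unfold_in /phi_pred /= => h1 h2.
rewrite leUx; apply/andP; split.
- exact: (le_trans h1 (leUl _ _)).
- exact: (le_trans h2 (leUr _ _)).
Qed.

Lemma phi_bot : \bot \in phi_pred.
Proof. by rewrite unfold_in /phi_pred /=. Qed.

Lemma phi_top : \top \in phi_pred.
Proof. by rewrite unfold_in /phi_pred /=. Qed.

HB.instance Definition _ :=
  Order.SubChoice_isTBSubLattice.Build _ LL phi_pred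
    (Order.prod_display d d) Phi phi_meet_closed phi_join_closed phi_bot phi_top.

End Phi.

Arguments phi_val {d L}.

(* Main.v *)
Require Import Defs.
From HB Require Import structures.
From mathcomp Require Import all_boot all_order.
From Stdlib Require Import Classical.
Import Order.Theory.
Local Open Scope order_scope.

Section Aux.
Context (d : Order.disp_t) (L : tbDistrLatticeType d).

Definition mk (a b : L) (h : a <= b) : Phi L := @MkPhi d L (a, b) h.

Lemma valI (x y : Phi L) :
  phi_val (x `&` y) = ((phi_val x).1 `&` (phi_val y).1, (phi_val x).2 `&` (phi_val y).2).
Proof. reflexivity. Qed.
Lemma valU (x y : Phi L) :
  phi_val (x `|` y) = ((phi_val x).1 `|` (phi_val y).1, (phi_val x).2 `|` (phi_val y).2).
Proof. reflexivity. Qed.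
Lemma leP' (x y : Phi L) :
  (x <= y) = ((phi_val x).1 <= (phi_val y).1) && ((phi_val x).2 <= (phi_val y).2).
Proof. reflexivity. Qed.
Lemma vP (x : Phi L) : (phi_val x).1 <= (phi_val x).2.
Proof. exact: phi_valP x. Qed.
Lemma val0 : phi_val (\bot : Phi L) = (\bot, \bot).
Proof. reflexivity. Qed.
Lemma val1 : phi_val (\top : Phi L) = (\top, \top).
Proof. reflexivity. Qed.

Lemma Peq (P : Phi L -> Prop) x y : phi_val x = phi_val y -> P x -> P y.
Proof. by move=> h; have -> : x = y by apply: val_inj. Qed.

Lemma ideal_bot (I : L -> Prop) : is_ideal I -> I \bot.
Proof. by move=> [[z hz] [hd _]]; apply: (hd _ z hz); exact: le0x. Qed.

Lemma ideal_top (I : L -> Prop) : is_prime_ideal I -> ~ I \top.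
Proof. by move=> [[_ [hd _]] [[z hz] _]] ht; apply: hz; apply: (hd _ _ ht); exact: lex1. Qed.

End Aux.
Arguments mk {d L a b}.
Arguments Peq {d L P x y}.
Arguments vP {d L}.
Arguments ideal_bot {d L I}.
Arguments ideal_top {d L I}.

Theorem mainTheorem4 (d : Order.disp_t) (L : tbDistrLatticeType d)
    (hL : \bot != \top :> L) (P : Phi L -> Prop) :
  is_prime_ideal P <->
  exists I : L -> Prop, is_prime_ideal I /\
    ((forall x : Phi L, P x <-> (I (phi_val x).1 /\ I (phi_val x).2)) \/
     (forall x : Phi L, P x <-> I (phi_val x).1)).
Proof.
split.
- move=> HP; have [[[z0 hz0] [hd hj]] [[w hw] hp]] := HP.
  pose e := mk (le0x (\top : L)).
  case: (classic (P e)) => He.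
  + exists (fun a => P (mk (lex1 a))).
    have key : forall x : Phi L, P x <-> P (mk (lex1 (phi_val x).1)).
      move=> x; split => hx.
        apply: (Peq _ (hj _ _ hx He)); rewrite valU /=.
        by rewrite joinx0 joinx1.
      apply: (hd _ _ hx); rewrite leP' /= lexx; exact: lex1.
    split; last by right.
    split; [split; [by exists \bot; apply: (Peq _ He)|split]|split].
    * move=> a b hb hab; apply: (hd _ _ hb); by rewrite leP' /= hab lexx.
    * move=> a b ha hb; apply: (Peq _ (hj _ _ ha hb)); by rewrite valU /= joinxx.
    * exists (phi_val w).1 => h; apply: hw; exact/key.
    * move=> a b ha hb h; apply: (hp _ _ ha hb); apply: (Peq _ h).
      by rewrite valI /= meetxx.
  + exists (fun a => P (mk (lexx a))).
    have key : forall x : Phi L, P x <-> (P (mk (lexx (phi_val x).1)) /\ P (mk (lexx (phi_val x).2))).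
      move=> x; split.
        move=> hx; split.
          apply: (hd _ _ hx); by rewrite leP' /= lexx vP.
        apply: NNPP => hn.
        have hb : P (mk (le0x (phi_val x).2)).
          apply: (hd _ _ hx); by rewrite leP' /= lexx le0x.
        apply: (hp _ _ hn He); apply: (Peq _ hb).
        by rewrite valI /= meetx0 meetx1.
      move=> [_ h2]; apply: (hd _ _ h2); by rewrite leP' /= lexx vP.
    split; last by left.
    split; [split; [|split]|split].
    * exists \bot; apply: (hd _ _ hz0); by rewrite leP' /= !le0x.
    * move=> a b hb hab; apply: (hd _ _ hb); by rewrite leP' /= hab.
    * move=> a b ha hb; apply: (Peq _ (hj _ _ ha hb)); by rewrite valU.
    * exists (phi_val w).2 => h; apply: hw; apply/key; split => //.
      apply: (hd _ _ h); by rewrite leP' /= vP.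
    * move=> a b ha hb h; apply: (hp _ _ ha hb); apply: (Peq _ h).
      by rewrite valI.
- move=> [I [HI [H|H]]]; have HI' := HI; move: HI' => [[[z hz] [hd hj]] [_ hp]].
  + have hb := ideal_bot (proj1 HI); have ht := ideal_top HI.
    split; [split; [|split]|split].
    * by exists \bot; apply/H; rewrite val0.
    * move=> x y /H [h1 h2]; rewrite leP' => /andP [l1 l2]; apply/H.
      by split; [apply: (hd _ _ h1 l1)|apply: (hd _ _ h2 l2)].
    * move=> x y /H [h1 h2] /H [h3 h4]; apply/H; rewrite valU /=; split; exact: hj.
    * by exists \top; move/H; rewrite val1 /= => [[]].
    * move=> x y hx hy /H; rewrite valI /= => [[_ h]].
      have nx : ~ I (phi_val x).2 by move=> h2; apply: hx; apply/H; split => //; exact: (hd _ _ h2 (vP x)).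
      have ny : ~ I (phi_val y).2 by move=> h2; apply: hy; apply/H; split => //; exact: (hd _ _ h2 (vP y)).
      exact: (hp _ _ nx ny h).
  + have hb := ideal_bot (proj1 HI); have ht := ideal_top HI.
    split; [split; [|split]|split].
    * by exists \bot; apply/H; rewrite val0.
    * move=> x y /H h1; rewrite leP' => /andP [l1 _]; apply/H; exact: (hd _ _ h1 l1).
    * move=> x y /H h1 /H h3; apply/H; rewrite valU /=; exact: hj.
    * by exists \top; move/H; rewrite val1.
    * move=> x y hx hy /H; rewrite valI /= => h.
      exact: (hp _ _ (fun h' => hx (proj2 (H x) h')) (fun h' => hy (proj2 (H y) h')) h).
Qed.
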